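(* Let $G=(X\cup Y,E)$ be a bipartite graph and let $t_0>0$. Let $\mathcal A$ be the set of all $A\subseteq X$ such that every component of $A$ is closed and $t_0$-contracting. Then \[ i(G)=\sum_{A\in\mathcal A}\mathcal D_A\cdot 2^{|Y\setminus N(A)|}\cdot \Xi_A, \] where $\mathcal D_A:=\prod_{A'\in\mathcal K(A)}\bigl|\{B\subseteq A' : B \text{ is 2-linked and } N(B)=N(A')\}\bigr|$ and \[ \Xi_A:=\sum_{k\ge 0}\ \sum_{\substack{\{B_1,\dots,B_k\}\subseteq \mathcal P_A \text{ compatible}\\ \text{each } B_i \text{ not } t_0\text{-contracting}}} 2^{-\sum_{i=1}^k|N(B_i)|}, \] the inner sum being over unordered collections (the case $k=0$ contributing $1$).
   Context: $i(G)$ is the number of independent sets of $G$. For $S\subseteq V$, $N(S)$ is the set of vertices adjacent to some vertex of $S$, and $N^2(S)=N(N(S))$. A set $A\subseteq X$ is 2-linked if it induces a connected subgraph of the square $G^2$ of $G$ (equivalently, any two of its vertices are joined by a sequence of vertices of $A$ with consecutive ones sharing a common neighbour); the components of $A$ are its maximal 2-linked subsets, and $\mathcal K(A)$ is the set of components of $A$. The closure of $A\subseteq X$ is $[A]:=\{x\in X: N(x)\subseteq N(A)\}$; $A$ is closed if $A=[A]$. A set $A\subseteq X$ is $t$-contracting if $|N(A)|<|[A]|+t$. A polymer is a 2-linked subset of $X$; a collection of polymers is compatible if their neighbourhoods are pairwise disjoint. For $A\subseteq X$, $X_A:=X\setminus N^2(A)$ and $\mathcal P_A$ is the set of polymers contained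 in $X_A$.
   Formalization: The bipartite graph G has no isolated vertex in X: every x ∈ X has at least one neighbour in Y. The statement above fails without it. *)

(* Defs.v *)
From HB Require Import structures.
From mathcomp Require Import all_boot all_order all_algebra.
Set Implicit Arguments. Unset Strict Implicit. Unset Printing Implicit Defensive.
Import Order.TTheory GRing.Theory Num.Theory.
Local Open Scope ring_scope.

Section Bipartite.
Variables (X Y : finType) (adj : X -> Y -> bool).

Definition bip_edge (u v : X + Y) : bool :=
  match u, v with
  | inl x, inr y => adj x y
  | inr y, inl x => adj x y
  | _, _ => false
  end.

Definition independent (I : {set X + Y}) : bool :=
  [forall u in I, forall v in I, ~~ bip_edge u v].

Definition num_indep : nat := #|[set I : {set X + Y} | independent I]|.

Definition nbhd (A : {set X}) : {set Y} := [set y | [exists x in A, adj x y]].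

Definition nbhd2 (A : {set X}) : {set X} :=
  [set x | [exists y in nbhd A, adj x y]].

(* x and x' share a common neighbour, i.e. are adjacent in the square G^2. *)
Definition share_nb (x x' : X) : bool := [exists y, adj x y && adj x' y].

Definition two_linked (A : {set X}) : bool :=
  (A != set0) &&
  [forall x in A, forall x' in A,
     connect [rel u v | [&& u \in A, v \in A & share_nb u v]] x x'].

Definition comps (A : {set X}) : {set {set X}} :=
  [set C : {set X} | [&& C \subset A, two_linked C &
     [forall D : {set X}, [&& C \subset D, D \subset A & two_linked D] ==> (D == C)]]].

Definition closure (A : {set X}) : {set X} :=
  [set x | nbhd [set x] \subset nbhd A].

Definition closed (A : {set X}) : bool := closure A == A.

Definition polymer (B : {set X}) : bool := two_linked B.

Definition compatible (P : {set {set X}}) : bool :=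
  [forall B1 in P, forall B2 in P, (B1 != B2) ==> [disjoint nbhd B1 & nbhd B2]].

Definition XA (A : {set X}) : {set X} := ~: nbhd2 A.

Definition DA (A : {set X}) : nat :=
  \prod_(A' in comps A)
     #|[set B : {set X} | [&& B \subset A', two_linked B & nbhd B == nbhd A']]|.

Variable R : realFieldType.

Definition contracting (t : R) (A : {set X}) : bool :=
  (#|nbhd A|%:R < #|closure A|%:R + t).

Definition calA (t : R) : {set {set X}} :=
  [set A : {set X} | [forall C in comps A, closed C && contracting t C]].

Definition XiA (t : R) (A : {set X}) : R :=
  \sum_(P : {set {set X}} | compatible P &&
          [forall B in P, [&& polymer B, B \subset XA A & ~~ contracting t B]])
     (2%:R : R) ^- (\sum_(B in P) #|nbhd B|)%N.

End Bipartite.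

(* Main.v *)
Require Import Defs.
From HB Require Import structures.
From mathcomp Require Import all_boot all_order all_algebra.
Import Order.TTheory GRing.Theory Num.Theory.
Set Implicit Arguments. Unset Strict Implicit. Unset Printing Implicit Defensive.

Section Graph.
Variables (X Y : finType) (adj : X -> Y -> bool).
Hypothesis hX : forall x : X, exists y : Y, adj x y.

Local Notation N := (@nbhd X Y adj).
Local Notation cl := (@Defs.closure X Y adj).
Local Notation tl := (two_linked adj).
Local Notation sh := (share_nb adj).
Implicit Types (A B C D E S : {set X}) (K : {set {set X}}).

Definition rl (A : {set X}) := [rel u v | [&& u \in A, v \in A & sh u v]].

Lemma inN A y : (y \in N A) = [exists x in A, adj x y].
Proof. by rewrite inE. Qed.

Lemma inNP A y : reflect (exists2 x, x \in A & adj x y) (y \in N A).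
Proof.
rewrite inN; apply: (iffP existsP) => [[x /andP[h1 h2]]|[x h1 h2]]; exists x => //.
by rewrite h1.
Qed.

Lemma shP x x' : reflect (exists y, adj x y /\ adj x' y) (sh x x').
Proof.
rewrite /share_nb; apply: (iffP existsP) => [[y /andP[h1 h2]]|[y [h1 h2]]]; exists y => //.
by rewrite h1.
Qed.

Lemma sh_refl x : sh x x.
Proof. by case: (hX x) => y hy; apply/shP; exists y. Qed.

Lemma shC x x' : sh x x' = sh x' x.
Proof. by apply/shP/shP => -[y [h1 h2]]; exists y. Qed.

Lemma rl_sym A : symmetric (rl A).
Proof. by move=> u v /=; rewrite shC; case: (u \in A); case: (v \in A). Qed.

Lemma connect_rlC A u v : connect (rl A) u v = connect (rl A) v u.
Proof. exact: (sym_connect_sym (@rl_sym A)). Qed.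

Lemma rl_mono A B u v : A \subset B -> connect (rl A) u v -> connect (rl B) u v.
Proof.
move=> sAB; apply: connect_sub => a b /and3P[ha hb hs]; apply: connect1.
by rewrite /= (subsetP sAB _ ha) (subsetP sAB _ hb).
Qed.

Lemma tlP A : reflect (A != set0 /\ {in A &, forall x x', connect (rl A) x x'}) (tl A).
Proof.
rewrite /two_linked; apply: (iffP andP) => [[h1 /forallP h2]|[h1 h2]]; split => //.
  move=> x x' hx hx'; move: (h2 x); rewrite hx /= => /forallP/(_ x'); rewrite hx'.
  exact.
by apply/forallP => x; apply/implyP => hx; apply/forallP => x'; apply/implyP => hx'; apply: h2.
Qed.

Lemma nbhd1 A x y : x \in A -> adj x y -> y \in N A.
Proof. by move=> hx hy; apply/inNP; exists x. Qed.

Lemma nbhdS A B : A \subset B -> N A \subset N B.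
Proof.
by move=> sAB; apply/subsetP => y /inNP[x hx hy]; apply: (nbhd1 (subsetP sAB _ hx)).
Qed.

Lemma in_cl A x : (x \in cl A) = (N [set x] \subset N A).
Proof. by rewrite inE. Qed.

Lemma sub_cl A : A \subset cl A.
Proof.
apply/subsetP => x hx; rewrite in_cl; apply: nbhdS; by rewrite sub1set.
Qed.

Lemma cl_adj A x y : x \in cl A -> adj x y -> y \in N A.
Proof.
rewrite in_cl => /subsetP h hxy; apply: h; apply: (@nbhd1 _ x) => //; exact: set11.
Qed.

Lemma nbhd_cl A : N (cl A) = N A.
Proof.
apply/eqP; rewrite eqEsubset (nbhdS (sub_cl A)) andbT.
by apply/subsetP => y /inNP[x hx hy]; apply: cl_adj hx hy.
Qed.

Lemma cl_eq A B : N A = N B -> cl A = cl B.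
Proof. by move=> h; apply/setP => x; rewrite !in_cl h. Qed.

Lemma cl_idem A : cl (cl A) = cl A.
Proof. by apply: cl_eq; rewrite nbhd_cl. Qed.

Lemma tl_union A B a b : tl A -> tl B -> a \in A -> b \in B -> sh a b -> tl (A :|: B).
Proof.
move=> /tlP[_ hA] /tlP[_ hB] ha hb hab.
have hw : forall w, w \in A :|: B -> connect (rl (A :|: B)) a w.
  move=> w; rewrite inE => /orP[hw|hw].
    by apply: (rl_mono (subsetUl A B)); apply: hA.
  apply: (@connect_trans _ _ b).
    by apply: connect1; rewrite /= !inE ha hb hab orbT.
  by apply: (rl_mono (subsetUr A B)); apply: hB.
apply/tlP; split.
  by apply/set0Pn; exists a; rewrite inE ha.
move=> u v hu hv; apply: (@connect_trans _ _ a); last exact: hw.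
by rewrite connect_rlC; apply: hw.
Qed.

Lemma cl_tl A : tl A -> tl (cl A).
Proof.
move=> /tlP[hne hA].
have hw : forall u, u \in cl A -> exists2 c, c \in A & connect (rl (cl A)) u c.
  move=> u hu; case: (hX u) => y hy.
  case/inNP: (cl_adj hu hy) => c hc hcy; exists c => //.
  apply: connect1; rewrite /= hu (subsetP (sub_cl A) _ hc) /=.
  by apply/shP; exists y.
apply/tlP; split.
  case/set0Pn: hne => a ha; apply/set0Pn; exists a; exact: (subsetP (sub_cl A)).
move=> u v hu hv; case: (hw u hu) => c hc huc; case: (hw v hv) => c' hc' hvc'.
apply: (connect_trans huc); apply: (@connect_trans _ _ c'); last by rewrite connect_rlC.
by apply: (rl_mono (sub_cl A)); apply: hA.
Qed.

Lemma compsP S C : reflect [/\ C \subset S, tl C &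
   forall D, C \subset D -> D \subset S -> tl D -> D = C] (C \in comps adj S).
Proof.
rewrite inE; apply: (iffP and3P) => [[h1 h2 /forallP h3]|[h1 h2 h3]]; split => //.
  move=> D hCD hDS hD; apply/eqP; move: (h3 D); by rewrite hCD hDS hD.
apply/forallP => D; apply/implyP => /and3P[a b c]; by rewrite (h3 D a b c).
Qed.

Lemma comps_eq S C D c d : C \in comps adj S -> D \in comps adj S ->
  c \in C -> d \in D -> sh c d -> C = D.
Proof.
move=> /compsP[hCS hC mC] /compsP[hDS hD mD] hc hd hcd.
have hU := tl_union hC hD hc hd hcd.
have hUS : C :|: D \subset S by rewrite subUset hCS hDS.
by rewrite -(mC _ (subsetUl C D) hUS hU) (mD _ (subsetUr C D) hUS hU).
Qed.

Lemma connect_restr (e : rel X) (a : pred X) x y :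
  (forall u v, a u -> e u v -> a v) -> a x -> connect e x y ->
  connect [rel u v | [&& a u, a v & e u v]] x y.
Proof.
move=> ha hx /connectP[p hp ->]; elim: p x hx hp => [|w p IH] x hx /=.
  by rewrite connect0.
case/andP=> hxw hp; have hw := ha _ _ hx hxw.
apply: (@connect_trans _ _ w); last exact: IH.
by apply: connect1; rewrite /= hx hw.
Qed.

Lemma comps_cover S x : x \in S -> exists2 C, C \in comps adj S & x \in C.
Proof.
move=> hx; set D := [set y in S | connect (rl S) x y].
have hxD : x \in D by rewrite inE hx connect0.
have hDS : D \subset S by apply/subsetP => y; rewrite inE => /andP[].
exists D => //; apply/compsP; split => //.
  apply/tlP; split; first by apply/set0Pn; exists x.
  move=> u v hu hv.
  have huv : connect (rl S) u v.
    move: hu hv; rewrite !inE => /andP[_ hu] /andP[_ hv].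
    by apply: (connect_trans _ hv); rewrite connect_rlC.
  have := @connect_restr (rl S) (mem D) u v.
  have hcl : forall u0 v0, u0 \in D -> rl S u0 v0 -> v0 \in D.
    move=> u0 v0; rewrite !inE => /andP[_ h1] h2.
    move: (h2) => /and3P[_ -> _] /=.
    by apply: (connect_trans h1); apply: connect1.
  move=> /(_ hcl hu huv); apply: connect_sub => a b /and3P[ha hb /and3P[_ _ hs]].
  by apply: connect1; apply/and3P; split.
move=> E hDE hES /tlP[_ hE]; apply/eqP; rewrite eqEsubset hDE andbT.
apply/subsetP => e he; rewrite inE (subsetP hES _ he) /=.
apply: (rl_mono hES); apply: hE => //; exact: (subsetP hDE).
Qed.

Lemma comps_sub S C : C \in comps adj S -> C \subset S.
Proof. by case/compsP. Qed.

Lemma comps_tl S C : C \in comps adj S -> tl C.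
Proof. by case/compsP. Qed.

Lemma comps_nbhd_disj S C D y : C \in comps adj S -> D \in comps adj S ->
  y \in N C -> y \in N D -> C = D.
Proof.
move=> hC hD /inNP[c hc hcy] /inNP[d hd hdy]; apply: (comps_eq hC hD hc hd).
by apply/shP; exists y.
Qed.

Lemma comps_char (K : {set {set X}}) :
  (forall C, C \in K -> tl C) ->
  (forall C D c d, C \in K -> D \in K -> c \in C -> d \in D -> sh c d -> C = D) ->
  comps adj (\bigcup_(C in K) C) = K.
Proof.
move=> hK hsh; set S := \bigcup_(C in K) C.
have hin : forall C, C \in K -> C \in comps adj S.
  move=> C hC; apply/compsP; split; [exact: bigcup_sup | exact: hK |].
  move=> D hCD hDS hD; apply/eqP; rewrite eqEsubset hCD andbT.
  case/tlP: (hK C hC) => /set0Pn[c hc] _.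
  case/tlP: hD => _ hDc; apply/subsetP => d hd.
  have hcd := hDc c d (subsetP hCD _ hc) hd.
  have hclo : closed (rl D) (mem C).
    have step : forall u v, rl D u v -> u \in C -> v \in C.
      move=> u v /and3P[hu hv huv] huC.
      case/bigcupP: (subsetP hDS _ hv) => C' hC' hvC'.
      by rewrite (hsh C C' u v hC hC' huC hvC' huv).
    move=> u v huv; apply/idP/idP; first exact: step huv.
    by apply: step; move: huv => /and3P[h1 h2 h3]; rewrite /= h1 h2 shC.
  by rewrite -(closed_connect hclo hcd).
apply/setP => D; apply/idP/idP; last exact: hin.
move=> hD; case/tlP: (comps_tl hD) => /set0Pn[d hd] _.
case/bigcupP: (subsetP (comps_sub hD) _ hd) => C hC hdC.
by rewrite (comps_eq hD (hin C hC) hd hdC (sh_refl d)).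
Qed.

End Graph.
Arguments inNP {X Y} adj {A y}.
Arguments tlP {X Y} adj {A}.
Arguments shP {X Y} adj {x x'}.


Lemma sum_card_disj (I T : finType) (P : {set I}) (f : I -> {set T}) :
 (forall i j, i \in P -> j \in P -> i != j -> [disjoint f i & f j]) ->
 \sum_(i in P) #|f i| = #|\bigcup_(i in P) f i|.
Proof.
move: {2}#|P| (leqnn #|P|) => n; elim: n P => [|n IH] P hn hd.
  move: hn; rewrite leqn0 => /eqP/cards0_eq ->.
  by rewrite !big_set0 cards0.
case: (set_0Vmem P) => [->|[a ha]]; first by rewrite !big_set0 cards0.
rewrite (big_setD1 a ha) (big_setD1 a ha) /=.
have hd' : forall i j, i \in P :\ a -> j \in P :\ a -> i != j -> [disjoint f i & f j].
  by move=> i j; rewrite !inE => /andP[_ hi] /andP[_ hj]; apply: hd.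
rewrite IH //; last by move: hn; rewrite (cardsD1 a P) ha.
rewrite cardsU.
have -> : f a :&: \bigcup_(i in P :\ a) f i = set0.
  apply: disjoint_setI0; apply: bigcup_disjoint => i; rewrite !inE => /andP[hia hi].
  by apply: hd; rewrite // eq_sym.
by rewrite cards0 subn0.
Qed.

Lemma prod_card (T : finType) (K : {set {set T}}) (F : {set T} -> {set {set T}}) :
  trivIset K -> (forall A B, A \in K -> B \in F A -> B \subset A) ->
  \prod_(A in K) #|F A| =
  #|[set S : {set T} | (S \subset cover K) && [forall A in K, (S :&: A) \in F A]]|.
Proof.
move: {2}#|K| (leqnn #|K|) => n; elim: n K => [|n IH] K hn hK hF.
  move: hn; rewrite leqn0 => /eqP/cards0_eq ->.
  rewrite big_set0; apply/esym/eqP/cards1P; exists set0; apply/setP => S.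
  rewrite !inE /cover big_set0 subset0.
  by apply/andP/idP => [[]//|->]; split => //; apply/forallP => A; rewrite inE.
case: (set_0Vmem K) => [hK0|[A0 hA0]].
  move: hn; rewrite hK0 => _; rewrite big_set0; apply/esym/eqP/cards1P; exists set0.
  apply/setP => S; rewrite !inE /cover big_set0 subset0.
  by apply/andP/idP => [[]//|->]; split => //; apply/forallP => A; rewrite inE.
set K' := K :\ A0.
have hK' : trivIset K' by apply: trivIsetS hK; apply: subsetDl.
have hn' : #|K'| <= n by move: hn; rewrite (cardsD1 A0 K) hA0.
have hF' : forall A B : {set T}, A \in K' -> B \in F A -> B \subset A.
  by move=> A B; rewrite inE => /andP[_ hA]; apply: hF.
rewrite (big_setD1 A0 hA0) /= -/K' (IH K' hn' hK' hF') -cardsX.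
have disjA : forall A : {set T}, A \in K' -> A :&: A0 = set0.
  move=> A; rewrite !inE => /andP[hne hA]; apply: disjoint_setI0.
  by move/trivIsetP: hK => /(_ A A0 hA hA0 hne).
have ncov : forall x : T, x \in cover K' -> x \notin A0.
  move=> x /bigcupP[A hA hxA]; apply/negP => hx.
  by have := disjA A hA; move/setP/(_ x); rewrite !inE hxA hx.
set G' := [set S | _ && _].
have key1 : forall B S' : {set T}, B \subset A0 -> S' \subset cover K' -> (B :|: S') :&: A0 = B.
  move=> B S' hB hS; apply/setP => x; rewrite !inE.
  case hxB: (x \in B); first by rewrite (subsetP hB _ hxB).
  by case hxS: (x \in S') => //=; rewrite (negbTE (ncov x (subsetP hS _ hxS))).
have key2 : forall B S' : {set T}, B \subset A0 -> S' \subset cover K' -> (B :|: S') :\: A0 = S'.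
  move=> B S' hB hS; apply/setP => x; rewrite !inE.
  case hxA0: (x \in A0) => /=.
    by apply/esym/negP => hxS; rewrite (negbTE (ncov x (subsetP hS _ hxS))) in hxA0.
  by case hxB: (x \in B) => //=; rewrite (subsetP hB _ hxB) in hxA0.
have key3 : forall B S' A : {set T}, B \subset A0 -> A \in K' -> (B :|: S') :&: A = S' :&: A.
  move=> B S' A hB hA; apply/setP => x; rewrite !inE.
  case hxB: (x \in B) => //=; case hxA: (x \in A); last by rewrite andbF.
  have := disjA A hA; move/setP/(_ x); by rewrite !inE hxA (subsetP hB _ hxB).
have covS : cover K' \subset cover K by apply/bigcupsP => A hA; apply: bigcup_sup;
  move: hA; rewrite inE => /andP[].
have hG : [set S : {set T} | (S \subset cover K) && [forall A in K, (S :&: A) \in F A]] =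
          [set p.1 :|: p.2 | p in setX (F A0) G'].
  apply/setP => S; apply/idP/imsetP.
    rewrite inE => /andP[hS /forallP hall].
    exists (S :&: A0, S :\: A0); last by rewrite /= setID.
    rewrite inE /= (implyP (hall A0) hA0) /= inE; apply/andP; split.
      apply/subsetP => x; rewrite inE => /andP[hxA0 hxS].
      case/bigcupP: (subsetP hS _ hxS) => A hA hxA; apply/bigcupP; exists A => //.
      by rewrite !inE hA andbT; apply/eqP => e; rewrite -e hxA in hxA0.
    apply/forallP => A; apply/implyP => hA.
    have -> : (S :\: A0) :&: A = S :&: A.
      apply/setP => x; rewrite !inE; case hxA: (x \in A); last by rewrite !andbF.
      have := disjA A hA; move/setP/(_ x); rewrite !inE hxA /= => hx0.
      by rewrite hx0.
    by apply: (implyP (hall A)); move: hA; rewrite inE => /andP[].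
  case=> -[B S'] /=; rewrite inE /= => /andP[hB]; rewrite inE => /andP[hS' /forallP hall] ->.
  have hB0 := hF A0 B hA0 hB.
  rewrite inE; apply/andP; split.
    rewrite subUset (subset_trans hS' covS) andbT.
    by apply: (subset_trans hB0); apply: bigcup_sup.
  apply/forallP => A; apply/implyP => hA.
  case: (eqVneq A A0) => [->|hne]; first by rewrite key1.
  have hA' : A \in K' by rewrite !inE hne hA.
  by rewrite key3 //; apply: (implyP (hall A)).
rewrite hG card_in_imset //.
move=> [B S'] [B2 S2] /setXP[hB hS] /setXP[hB2 hS2] /= heq.
move: hS hS2; rewrite !inE => /andP[hS _] /andP[hS2 _].
have hB0 := hF A0 B hA0 hB; have hB20 := hF A0 B2 hA0 hB2.
have e1 : B = B2 by rewrite -(key1 _ _ hB0 hS) heq key1.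
have e2 : S' = S2 by rewrite -(key2 _ _ hB0 hS) heq key2.
by rewrite e1 e2.
Qed.


Section Main.
Variables (X Y : finType) (adj : X -> Y -> bool).
Hypothesis hX : forall x : X, exists y : Y, adj x y.

Local Notation N := (@nbhd X Y adj).
Local Notation cl := (@Defs.closure X Y adj).
Local Notation tl := (two_linked adj).
Local Notation sh := (share_nb adj).
Implicit Types (A B C D E S : {set X}) (K P : {set {set X}}).

Lemma indep_sum : num_indep adj = \sum_(S : {set X}) 2 ^ #|~: N S|.
Proof.
pose phi := fun I : {set X + Y} => ([set x | inl x \in I], [set y | inr y \in I]).
have inj : injective phi.
  move=> I J [h1 h2]; apply/setP => -[x|y].
    by move/setP: h1 => /(_ x); rewrite !inE.
  by move/setP: h2 => /(_ y); rewrite !inE.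
rewrite /num_indep -(card_in_imset (f:=phi) (in2W inj)).
have -> : phi @: [set I | independent adj I] =
          [set p : {set X} * {set Y} | p.2 \subset ~: N p.1].
  apply/setP => -[S T]; rewrite inE /=; apply/imsetP/idP.
    case=> I hI [-> ->]; apply/subsetP => y hy; rewrite in_setC.
    apply/negP => /(inNP adj) [x hx hxy]; rewrite !inE in hx hy.
    move: hI; rewrite inE => /forallP/(_ (inl x)) /implyP/(_ hx)
      /forallP/(_ (inr y)) /implyP/(_ hy); by rewrite /= hxy.
  move=> hST.
  exists [set u | match u with inl x => x \in S | inr y => y \in T end].
    rewrite inE; apply/forallP => u; apply/implyP; rewrite inE => hu.
    apply/forallP => v; apply/implyP; rewrite inE => hv.
    case: u hu => [x|y] hu; case: v hv => [x'|y'] hv //=.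
      apply/negP => h; move: (subsetP hST _ hv); rewrite inE => /negP; apply.
      by apply/(inNP adj); exists x.
    apply/negP => h; move: (subsetP hST _ hu); rewrite inE => /negP; apply.
    by apply/(inNP adj); exists x'.
  by congr pair; apply/setP => z; rewrite !inE.
rewrite -sum1dep_card (eq_bigl (fun p : {set X} * {set Y} =>
   predT p.1 && (p.2 \subset ~: N p.1))) //.
rewrite -(pair_big_dep predT (fun (S : {set X}) (T : {set Y}) => T \subset ~: N S) (fun _ _ => 1%N)).
apply: eq_bigr => S _; rewrite sum1dep_card -card_powerset.
by apply: eq_card => T; rewrite powersetE.
Qed.

Variables (R : realFieldType) (t : R).
Local Notation ctr := (@contracting X Y adj R t).

Lemma ctr_eqN A B : N A = N B -> ctr A = ctr B.
Proof. by move=> h; rewrite /contracting (cl_eq h) h. Qed.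

Definition S1f S := \bigcup_(C in comps adj S | ctr C) C.
Definition PSf S := [set C in comps adj S | ~~ ctr C].
Definition ASf S := \bigcup_(C in comps adj S | ctr C) cl C.
Definition FA A' := [set B : {set X} | [&& B \subset A', two_linked adj B & nbhd adj B == nbhd adj A']].
Definition good A S1 := (S1 \subset A) && [forall A' in comps adj A, (S1 :&: A') \in FA A'].
Definition validP A P := compatible adj P &&
   [forall B in P, [&& polymer adj B, B \subset XA adj A & ~~ ctr B]].
Definition Phi S1 P := S1 :|: \bigcup_(B in P) B.

Lemma compsAS S : comps adj (ASf S) = [set cl C | C in [set C in comps adj S | ctr C]].
Proof.
set K := [set cl C | C in _].
have -> : ASf S = \bigcup_(D in K) D.
  apply/setP => x; apply/bigcupP/bigcupP => [[C hC hx]|[D hD hx]].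
    by exists (cl C) => //; apply/imsetP; exists C => //; rewrite inE.
  case/imsetP: hD hx => C hC -> hx; exists C => //; by rewrite inE in hC.
apply: (comps_char hX) => //.
  by move=> D /imsetP[C hC ->]; apply: cl_tl => //; move: hC; rewrite inE => /andP[/comps_tl].
move=> D1 D2 c d /imsetP[C1 hC1 ->] /imsetP[C2 hC2 ->] hc hd /(shP adj) [y [hcy hdy]].
move: hC1; rewrite inE => /andP[hC1 _]; move: hC2; rewrite inE => /andP[hC2 _].
by rewrite (comps_nbhd_disj hC1 hC2 (cl_adj hc hcy) (cl_adj hd hdy)).
Qed.

Lemma AS_calA S : ASf S \in calA adj t.
Proof.
rewrite inE; apply/forallP => A'; apply/implyP; rewrite compsAS => /imsetP[C hC ->].
rewrite inE in hC; case/andP: hC => _ hc.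
by rewrite /Defs.closed cl_idem eqxx /= (ctr_eqN (nbhd_cl adj C)).
Qed.

Lemma AS_good S : good (ASf S) (S1f S).
Proof.
apply/andP; split.
  apply/subsetP => x /bigcupP[C hC hx]; apply/bigcupP; exists C => //.
  exact: (subsetP (sub_cl adj C)).
apply/forallP => A'; apply/implyP; rewrite compsAS => /imsetP[C hC ->].
rewrite inE in hC; case/andP: hC => hC hc.
have -> : S1f S :&: cl C = C.
  apply/setP => x; rewrite inE; apply/andP/idP.
    case=> /bigcupP[C' /andP[hC' _] hxC'] hxC.
    case: (hX x) => y hy.
    by rewrite (comps_nbhd_disj hC hC' (cl_adj hxC hy) (nbhd1 hxC' hy)).
  move=> hx; split; last exact: (subsetP (sub_cl adj C)).
  by apply/bigcupP; exists C => //; rewrite hC.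
by rewrite inE sub_cl (comps_tl hC) nbhd_cl eqxx.
Qed.

Lemma AS_valid S : validP (ASf S) (PSf S).
Proof.
apply/andP; split.
  apply/forallP => B1; apply/implyP => h1; apply/forallP => B2; apply/implyP => h2.
  apply/implyP => hne; rewrite -setI_eq0; apply/eqP/setP => y; rewrite in_setI in_set0.
  apply/negP => /andP[y1 y2]; move: h1; rewrite inE => /andP[h1 _]; move: h2; rewrite inE => /andP[h2 _].
  by move: hne; rewrite (comps_nbhd_disj h1 h2 y1 y2) eqxx.
apply/forallP => B; apply/implyP; rewrite inE => /andP[hB hc].
rewrite /polymer (comps_tl hB) hc andbT /=.
apply/subsetP => x hx; rewrite inE; apply/negP; rewrite inE => /existsP[y /andP[hy hxy]].
case/(inNP adj): hy => z /bigcupP[C /andP[hC hcC] hzC] hzy.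
have e := comps_nbhd_disj hB hC (nbhd1 hx hxy) (cl_adj hzC hzy).
by move: hc; rewrite e hcC.
Qed.

Lemma Phi_AS S : Phi (S1f S) (PSf S) = S.
Proof.
apply/setP => x; apply/idP/idP.
  rewrite inE => /orP[/bigcupP[C /andP[hC _] hx]|/bigcupP[C hC hx]].
    exact: (subsetP (comps_sub hC)).
  by move: hC; rewrite inE => /andP[hC _]; exact: (subsetP (comps_sub hC)).
move=> hx; case: (comps_cover adj hx) => C hC hxC; rewrite inE.
case hc: (ctr C).
  by apply/orP; left; apply/bigcupP; exists C; rewrite ?hC.
by apply/orP; right; apply/bigcupP; exists C; rewrite // inE hC hc.
Qed.

Section Valid.
Variables (A S1 : {set X}) (P : {set {set X}}).
Hypotheses (hA : A \in calA adj t) (hg : good A S1) (hv : validP A P).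

Lemma hA' A' : A' \in comps adj A -> cl A' = A' /\ ctr A'.
Proof.
move=> h; move: hA; rewrite inE => /forallP/(_ A') /implyP/(_ h) /andP[/eqP -> ->].
by [].
Qed.

Lemma hS1A : S1 \subset A.
Proof. by case/andP: hg. Qed.

Lemma hS1c A' : A' \in comps adj A ->
  [/\ S1 :&: A' \subset A', tl (S1 :&: A') & N (S1 :&: A') = N A'].
Proof.
move=> h; case/andP: hg => _ /forallP/(_ A') /implyP/(_ h).
by rewrite inE => /and3P[a b /eqP c].
Qed.

Lemma hPB B : B \in P -> [/\ tl B, B \subset XA adj A & ~~ ctr B].
Proof.
move=> h; case/andP: hv => _ /forallP/(_ B) /implyP/(_ h) /and3P[a b c]; by split.
Qed.

Lemma nNA B y : B \in P -> y \in N B -> y \notin N A.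
Proof.
move=> hB /(inNP adj) [b hb hby]; case: (hPB hB) => _ hXA _.
apply/negP => hy; move: (subsetP hXA _ hb); rewrite !inE => /negP; apply.
by apply/existsP; exists y; rewrite hy hby.
Qed.

Lemma compatP B1 B2 y : B1 \in P -> B2 \in P -> y \in N B1 -> y \in N B2 -> B1 = B2.
Proof.
move=> h1 h2 y1 y2; case/andP: hv => /forallP/(_ B1) /implyP/(_ h1)
  /forallP/(_ B2) /implyP/(_ h2) /implyP hi _.
apply/eqP; apply: contraT => hne; move: (hi hne); rewrite -setI_eq0 => /eqP/setP/(_ y).
by rewrite in_setI in_set0 y1 y2.
Qed.

Definition KK := [set S1 :&: A' | A' in comps adj A] :|: P.

Lemma Phi_KK : Phi S1 P = \bigcup_(D in KK) D.
Proof.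
apply/setP => x; apply/idP/bigcupP.
  rewrite inE => /orP[hx|/bigcupP[B hB hx]].
    case: (comps_cover adj (subsetP hS1A _ hx)) => A' hA'1 hxA'.
    exists (S1 :&: A'); last by rewrite inE hx hxA'.
    by rewrite inE; apply/orP; left; apply/imsetP; exists A'.
  by exists B => //; rewrite inE hB orbT.
move=> [D]; rewrite inE => /orP[/imsetP[A' _ ->]|hD] hx; rewrite inE.
  by move: hx; rewrite inE => /andP[-> _].
by apply/orP; right; apply/bigcupP; exists D.
Qed.

Lemma comps_Phi : comps adj (Phi S1 P) = KK.
Proof.
rewrite Phi_KK; apply: (comps_char hX) => //.
  move=> D; rewrite inE => /orP[/imsetP[A' hA'1 ->]|hD].
    by case: (hS1c hA'1).
  by case: (hPB hD).
have inA : forall A' x, A' \in comps adj A -> x \in S1 :&: A' -> x \in A.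
  by move=> A' x _; rewrite inE => /andP[hx _]; apply: (subsetP hS1A).
move=> D1 D2 c d; rewrite !inE => /orP[/imsetP[A1 h1 ->]|h1] /orP[/imsetP[A2 h2 ->]|h2] hc hd
  /(shP adj) [y [hcy hdy]].
- move: hc hd; rewrite !inE => /andP[_ hc] /andP[_ hd].
  suff -> : A1 = A2 by [].
  by apply: (comps_eq h1 h2 hc hd); apply/(shP adj); exists y.
- by move: (nNA h2 (nbhd1 hd hdy)); rewrite (nbhd1 (inA _ _ h1 hc) hcy).
- by move: (nNA h1 (nbhd1 hc hcy)); rewrite (nbhd1 (inA _ _ h2 hd) hdy).
- exact: (compatP h1 h2 (nbhd1 hc hcy) (nbhd1 hd hdy)).
Qed.

Lemma ctr_KK D : D \in KK -> ctr D = (D \in [set S1 :&: A' | A' in comps adj A]).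
Proof.
rewrite inE => /orP[hD|hD].
  rewrite hD; case/imsetP: hD => A' h ->; case: (hS1c h) => _ _ e.
  by rewrite (ctr_eqN e); case: (hA' h).
case: (hPB hD) => _ _ /negbTE ->; apply/esym/negP => /imsetP[A' h e].
case: (hS1c h) => _ /(tlP adj) [/set0Pn[x hx] _] _.
case: (hX x) => y hy.
have hyA : y \in N A by apply: (nbhd1 (x:=x)) => //; move: hx; rewrite inE => /andP[/(subsetP hS1A)].
have hxD : x \in D by rewrite e.
by move: (nNA hD (nbhd1 hxD hy)); rewrite hyA.
Qed.

Lemma inv_PS : PSf (Phi S1 P) = P.
Proof.
apply/setP => D; rewrite inE comps_Phi; apply/andP/idP.
  by case=> hD; rewrite (ctr_KK hD) => /negbTE h; move: hD; rewrite inE h.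
move=> hD; have hK : D \in KK by rewrite inE hD orbT.
by split => //; case: (hPB hD).
Qed.

Lemma inv_S1 : S1f (Phi S1 P) = S1.
Proof.
apply/setP => x; apply/bigcupP/idP.
  case=> D; rewrite comps_Phi => /andP[hD]; rewrite (ctr_KK hD) => /imsetP[A' _ ->].
  by rewrite inE => /andP[].
move=> hx; case: (comps_cover adj (subsetP hS1A _ hx)) => A' h hxA'.
have hD : S1 :&: A' \in [set S1 :&: A' | A' in comps adj A] by apply/imsetP; exists A'.
have hK : S1 :&: A' \in KK by rewrite inE hD.
exists (S1 :&: A'); first by rewrite comps_Phi hK (ctr_KK hK) hD.
by rewrite inE hx hxA'.
Qed.

Lemma inv_AS : ASf (Phi S1 P) = A.
Proof.
apply/setP => x; apply/bigcupP/idP.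
  case=> D; rewrite comps_Phi => /andP[hD]; rewrite (ctr_KK hD) => /imsetP[A' h ->].
  case: (hS1c h) => _ _ e; rewrite (cl_eq e); case: (hA' h) => -> _.
  exact: (subsetP (comps_sub h)).
move=> hx; case: (comps_cover adj hx) => A' h hxA'.
have hD : S1 :&: A' \in [set S1 :&: A' | A' in comps adj A] by apply/imsetP; exists A'.
have hK : S1 :&: A' \in KK by rewrite inE hD.
exists (S1 :&: A'); first by rewrite comps_Phi hK (ctr_KK hK) hD.
case: (hS1c h) => _ _ e; rewrite (cl_eq e); by case: (hA' h) => ->.
Qed.

Lemma weight : (#|~: N (Phi S1 P)| + \sum_(B in P) #|N B|)%N = #|~: N A|.
Proof.
set U := \bigcup_(B in P) N B.
have hNP : N (Phi S1 P) = N A :|: U.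
  apply/setP => y; apply/idP/idP.
    case/(inNP adj) => x; rewrite inE => /orP[hx|/bigcupP[B hB hx]] hxy; rewrite inE.
      by rewrite (nbhd1 (subsetP hS1A _ hx) hxy).
    by apply/orP; right; apply/bigcupP; exists B => //; apply: nbhd1 hx hxy.
  rewrite inE => /orP[/(inNP adj) [x hx hxy]|/bigcupP[B hB hy]].
    case: (comps_cover adj hx) => A' h hxA'; case: (hS1c h) => hs _ e.
    have : y \in N (S1 :&: A') by rewrite e; apply: nbhd1 hxA' hxy.
    case/(inNP adj) => x' hx' hx'y; apply: (nbhd1 (x:=x')) => //.
    by rewrite inE; move: hx'; rewrite inE => /andP[-> _].
  case/(inNP adj): hy => x hx hxy; apply: (nbhd1 (x:=x)) => //.
  by rewrite inE; apply/orP; right; apply/bigcupP; exists B.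
rewrite sum_card_disj; last first.
  move=> B1 B2 h1 h2 hne; rewrite -setI_eq0; apply/eqP/setP => y; rewrite in_setI in_set0.
  apply/negP => /andP[y1 y2]; by move: hne; rewrite (compatP h1 h2 y1 y2) eqxx.
rewrite -/U -(cardsID U (~: N A)).
have -> : ~: N A :&: U = U.
  apply/setIidPr/subsetP => y /bigcupP[B hB hy]; rewrite inE; exact: nNA hy.
have -> : ~: N A :\: U = ~: N (Phi S1 P).
  by apply/setP => y; rewrite hNP !inE negb_or andbC.
by rewrite addnC.
Qed.

End Valid.

Lemma DA_card A : DA adj A = #|[set S1 | good A S1]|.
Proof.
have htriv : trivIset (comps adj A).
  apply/trivIsetP => C D hC hD hne; rewrite -setI_eq0; apply/eqP/setP => x; rewrite !inE.
  apply/negP => /andP[hx1 hx2].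
  by move: hne; rewrite (comps_eq hC hD hx1 hx2 (sh_refl hX x)) eqxx.
have hF : forall A' B, A' \in comps adj A -> B \in FA A' -> B \subset A'.
  by move=> A' B _; rewrite inE => /and3P[].
have hcov : cover (comps adj A) = A.
  apply/setP => x; apply/bigcupP/idP => [[C hC hx]|hx].
    exact: (subsetP (comps_sub hC)).
  by case: (comps_cover adj hx) => C hC hxC; exists C.
have := prod_card htriv hF; rewrite hcov => e.
rewrite /DA; etransitivity; first exact: e.
by apply: eq_card => S; rewrite !inE.
Qed.

End Main.

Unset Implicit Arguments.
Local Open Scope ring_scope.

Theorem mainTheorem2 (R : realFieldType) (X Y : finType) (adj : X -> Y -> bool)
  (t0 : R) (ht0 : 0 < t0)
  (hX : forall x : X, exists y : Y, adj x y) :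
  (num_indep adj)%:R =
  \sum_(A in calA adj t0)
     (DA adj A)%:R * (2%:R : R) ^+ #|~: nbhd adj A| * XiA adj t0 A.
Proof.
rewrite indep_sum natr_sum.
under eq_bigr do rewrite natrX.
rewrite (partition_big (ASf adj t0) (mem (calA adj t0))) /=; last first.
  by move=> S _; apply: AS_calA.
apply: eq_bigr => A hA.
rewrite (partition_big (S1f adj t0) (good adj A)) /=; last first.
  by move=> S /eqP <-; apply: AS_good.
rewrite (DA_card hX) -sum1dep_card natr_sum !mulr_suml.
apply: eq_bigr => S1 hS1.
rewrite (partition_big (PSf adj t0) (validP adj t0 A)) /=; last first.
  by move=> S /andP[/eqP <- _]; apply: AS_valid.
rewrite /XiA mul1r mulr_sumr.
apply: eq_bigr => P hP.
rewrite (big_pred1 (Phi S1 P)); last first.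
  move=> S /=; apply/idP/eqP.
    by case/andP => /andP[/eqP e1 /eqP e2] /eqP e3; rewrite -e2 -e3 Phi_AS.
  by move=> ->; rewrite (inv_AS hX hA hS1 hP) (inv_S1 hX hA hS1 hP) (inv_PS hX hA hS1 hP) !eqxx.
rewrite -(weight hS1 hP) exprD mulfK //.
by rewrite expf_neq0 // pnatr_eq0.
Qed.
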